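(* The category $\mathcal{C}$ does not have duals for objects.
   Context: $\mathcal{C}$ is the monoidal category whose objects are finite ordered subsets of $\mathbb{N}$ (possibly with repetitions), with monoidal product union and unit $\emptyset$, whose morphisms are complex matrices with rows and columns labeled by the two objects (composition being matrix product along the common label set, monoidal product of morphisms being direct sum). A monoidal category has duals for objects if every object $A$ has a dual object $A^*$ together with evaluation $e_A:A\otimes A^*\to\mathds{1}$ and coevaluation $i_A:\mathds{1}\to A^*\otimes A$ morphisms satisfying the usual adjunction (zig-zag) identities. Here, via the functor $\operatorname{sDet}$ (which sends a matrix $X$ with row labels $R$, column labels $S$ to $\sum_{I\subseteq R,J\subseteq S}\det(X_{I,J})|I\rangle\langle J|$ on tensor products of copies of $\mathbb{C}^2$), the evaluation for a single wire would have to correspond to the vector $|00\rangle+|11\rangle$. *)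

(* Defs.v *)
From HB Require Import structures.
From mathcomp Require Import all_boot all_order all_algebra.
From mathcomp Require Import complex.
From mathcomp Require Import Rstruct.
Set Implicit Arguments. Unset Strict Implicit. Unset Printing Implicit Defensive.
Import Order.TTheory GRing.Theory Num.Theory.
Local Open Scope ring_scope.

Definition Cx : Type := complex Rdefinitions.R.

Definition Obj := seq nat.

(* A morphism A -> B is a complex matrix with rows labelled by B and
   columns labelled by A (so composition g o f is the matrix product g *m f). *)
Definition Hom (A B : Obj) := 'M[Cx]_(size B, size A).

Definition comp (A B D : Obj) (g : Hom B D) (f : Hom A B) : Hom A D := g *m f.
Definition idm (A : Obj) : Hom A A := 1%:M.

Definition tens (A B : Obj) : Obj := A ++ B.
Definition unitO : Obj := [::].

Definition tensM (A A' B B' : Obj) (f : Hom A B) (g : Hom A' B')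
  : Hom (tens A A') (tens B B') :=
  castmx (esym (size_cat B B'), esym (size_cat A A')) (block_mx f 0 0 g).

(* The structural isomorphisms (associators, unitors) are the identities on
   labels; since e.g. A ++ (B ++ D) and (A ++ B) ++ D are the same label list
   but not convertible as types, we realise them by the "identity-on-positions"
   matrix between two label lists of the same length. *)
Definition canon (A B : Obj) : Hom A B :=
  \matrix_(i < size B, j < size A) (((i : nat) == j)%:R : Cx).

Definition assoc (A B D : Obj) : Hom (tens (tens A B) D) (tens A (tens B D)) :=
  canon _ _.
Definition assoc_inv (A B D : Obj) : Hom (tens A (tens B D)) (tens (tens A B) D) :=
  canon _ _.
Definition lunit (A : Obj) : Hom (tens unitO A) A := canon _ _.
Definition lunit_inv (A : Obj) : Hom A (tens unitO A) := canon _ _.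
Definition runit (A : Obj) : Hom (tens A unitO) A := canon _ _.
Definition runit_inv (A : Obj) : Hom A (tens A unitO) := canon _ _.

Definition is_dual (A Ad : Obj) (e : Hom (tens A Ad) unitO)
  (i : Hom unitO (tens Ad A)) : Prop :=
  comp (lunit A)
    (comp (tensM e (idm A))
      (comp (assoc_inv A Ad A)
        (comp (tensM (idm A) i) (runit_inv A)))) = idm A
  /\
  comp (runit Ad)
    (comp (tensM (idm Ad) e)
      (comp (assoc Ad A Ad)
        (comp (tensM i (idm Ad)) (lunit_inv Ad)))) = idm Ad.

Definition has_duals : Prop :=
  forall A : Obj, exists (Ad : Obj) (e : Hom (tens A Ad) unitO)
    (i : Hom unitO (tens Ad A)), is_dual e i.

(* Main.v *)
Require Import Defs.
From mathcomp Require Import all_boot all_order all_algebra complex Rstruct.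
Import GRing.Theory.
Local Open Scope ring_scope.
Lemma foo (Ad : Obj) (e : Defs.Hom (tens [:: 0%N] Ad) unitO) (k : 'I_ _) :
  (tensM e (idm [:: 0%N])) ord0 k = (((k:nat) == (size Ad).+1)%:R : complex Rdefinitions.R).
Proof.
rewrite /tensM castmxE /= /block_mx !mxE.
case: splitP => [[]//|j _].
rewrite mxE.
case: splitP => [j' /= Hj|j' /= Hj].
  rewrite mxE. have := ltn_ord j'; rewrite /= -Hj => lt. by rewrite (ltn_eqF lt).
by rewrite /idm mxE Hj !ord1 /= addn0 eqxx.
Qed.
Lemma foo2 (Ad : Obj) (i : Defs.Hom unitO (tens Ad [:: 0%N])) (k : 'I_ _) :
  (tensM (idm [:: 0%N]) i) k ord0 = (((k:nat) == 0%N)%:R : complex Rdefinitions.R).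
Proof.
rewrite /tensM castmxE /= /block_mx !mxE.
case: splitP => [j /= Hj|j /= Hj].
  rewrite !mxE; case: splitP => [j' _|[]//]. by rewrite /idm mxE Hj !ord1.
rewrite !mxE; case: splitP => [j' _|[]//]. by rewrite mxE Hj.
Qed.
Lemma canonE (A B : Obj) i j : (canon A B) i j = (((i:nat) == j)%:R : complex Rdefinitions.R).
Proof. by rewrite mxE. Qed.

Theorem mainTheorem6 : ~ has_duals.
Proof.
move=> /(_ [:: 0%N]) [Ad [e [i [H _]]]].
move: H; rewrite /Defs.comp.
set X := tensM e _. set C := assoc_inv _ _ _. set Y := tensM _ i.
have M0 : (X *m C) *m Y = 0.
  apply/matrixP => a b; rewrite !ord1 !mxE.
  apply: big1 => l _.
  rewrite /Y foo2; case: (boolP (_ == _)) => Hl; last by rewrite mulr0.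
  rewrite mulr1 mxE; apply: big1 => k _.
  rewrite /X foo canonE (eqP Hl).
  case: (boolP (_ == _)) => Hk; last by rewrite mul0r.
  by rewrite (eqP Hk) mulr0.
rewrite (mulmxA C Y) (mulmxA X (C *m Y)) (mulmxA X C) M0 mul0mx mulmx0 => /matrixP /(_ ord0 ord0).
rewrite /idm !mxE /= => /eqP; by rewrite eq_sym oner_eq0.
Qed.
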